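(* Let $S$ be a finite $0$-rectangular band whose non-zero $\mathscr{D}$-class $D=R\times C$ has $m$ rows and $n$ columns, and put $a=n/m$. Suppose that $S$ has a permutation matching. Then for any collection $T$ of $t$ rows of $D$ $(1\le t\le m)$, \[ |\{c\in C: c\cap E(T)\neq\emptyset\}|\ \ge\ ta, \] and for any collection $T$ of $t$ columns of $D$ $(1\le t\le n)$, \[ |\{r\in R: r\cap E(T)\neq\emptyset\}|\ \ge\ \frac{t}{a}. \]
   Context: A finite $0$-rectangular band with $m$ rows and $n$ columns is described as follows: $S=(R\times C)\cup\{0\}$ with $R=\{1,\dots,m\}$ (rows), $C=\{1,\dots,n\}$ (columns), and a set $E\subseteq R\times C$ meeting every row and every column; multiplication is $(i,j)(k,l)=(i,l)$ if $(k,j)\in E$ and $0$ otherwise, with $0$ a zero. Then $E$ is exactly the set of non-zero idempotents, $D=R\times C$ is the non-zero $\mathscr{D}$-class, a row is the set $\{i\}\times C$ and a column is $R\times\{j\}$. For a set $T$ of rows (resp. columns), $E(T)$ denotes the set of idempotents lying in the union of the members of $T$; a column $c$ (resp. row $r$) is regarded as a subset of $D$. For $x\in S$, $V(x)=\{y: xyx=x,\ yxy=y\}$; a permutation matching of $S$ is a bijection $\phi:S\to S$ with $\phi(x)\in V(x)$ for all $x$. *)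

(* Defs.v *)
From mathcomp Require Import all_boot all_order all_algebra.
Set Implicit Arguments. Unset Strict Implicit. Unset Printing Implicit Defensive.

(* Finite 0-rectangular band with rows 'I_m, columns 'I_n and idempotent set E.
   Elements: None = 0, Some (i, j) = (i, j). *)
Definition rb_mul (m n : nat) (E : {set 'I_m * 'I_n})
    (x y : option ('I_m * 'I_n)) : option ('I_m * 'I_n) :=
  match x, y with
  | Some (i, j), Some (k, l) => if (k, j) \in E then Some (i, l) else None
  | _, _ => None
  end.

Definition rb_inverse (m n : nat) (E : {set 'I_m * 'I_n})
    (x y : option ('I_m * 'I_n)) : Prop :=
  rb_mul E (rb_mul E x y) x = x /\ rb_mul E (rb_mul E y x) y = y.

Definition permutation_matching (m n : nat) (E : {set 'I_m * 'I_n})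
    (phi : option ('I_m * 'I_n) -> option ('I_m * 'I_n)) : Prop :=
  bijective phi /\ forall x, rb_inverse E x (phi x).

Definition cols_meeting (m n : nat) (E : {set 'I_m * 'I_n}) (T : {set 'I_m})
  : {set 'I_n} := [set c | [exists r in T, (r, c) \in E]].

Definition rows_meeting (m n : nat) (E : {set 'I_m * 'I_n}) (T : {set 'I_n})
  : {set 'I_m} := [set r | [exists c in T, (r, c) \in E]].

(* Main.v *)
Require Import Defs.
From mathcomp Require Import all_boot all_order all_algebra.
Import Order.TTheory GRing.Theory Num.Theory.
Local Open Scope ring_scope.

Lemma phi_some (m n : nat) (E : {set 'I_m * 'I_n}) phi i j :
  rb_inverse E (Some (i, j)) (phi (Some (i, j))) ->
  exists k l, phi (Some (i, j)) = Some (k, l) /\ (i, l) \in E /\ (k, j) \in E.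
Proof.
case: (phi (Some (i, j))) => [[k l]|]; rewrite /rb_inverse /=; last by case.
case: ifP => Hkj [] //=; case: ifP => Hil // _ _.
by exists k, l.
Qed.

Lemma count_ineq (A B : finType) (X : {set A}) (Y : {set B}) (g : A -> B) :
  injective g -> (forall x, x \in X -> g x \in Y) -> (#|X| <= #|Y|)%N.
Proof.
move=> ig H.
rewrite -(card_imset X ig); apply: subset_leq_card.
by apply/subsetP => y /imsetP [x Hx ->]; apply: H.
Qed.

Theorem lemma2p2 (m n : nat) (E : {set 'I_m * 'I_n}) :
  (forall i : 'I_m, exists j : 'I_n, (i, j) \in E) ->
  (forall j : 'I_n, exists i : 'I_m, (i, j) \in E) ->
  (exists phi, permutation_matching E phi) ->
  let a : rat := n%:R / m%:R in
  (forall T : {set 'I_m}, (1 <= #|T|)%N ->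
     #|T|%:R * a <= #|cols_meeting E T|%:R) /\
  (forall T : {set 'I_n}, (1 <= #|T|)%N ->
     #|T|%:R / a <= #|rows_meeting E T|%:R).
Proof.
move=> _ _ [phi [[psi K1 K2] Hinv]] a.
pose g (p : 'I_m * 'I_n) := odflt p (phi (Some p)).
have gS : forall p, phi (Some p) = Some (g p).
  move=> [i j]; rewrite /g.
  have [k [l [-> _]]] := (@phi_some _ _ E phi i j (Hinv (Some (i, j)))).
  by [].
have ig : injective g.
  move=> p q e; have := f_equal psi (gS p); rewrite e -gS !K1.
  by case.
split=> T HT.
- have m0 : (0 < m)%N.
    case/card_gt0P: HT => i _; exact: (leq_ltn_trans (leq0n _) (ltn_ord i)).
  have H : (#|setX T [set: 'I_n]| <= #|setX [set: 'I_m] (cols_meeting E T)|)%N.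
    apply: (@count_ineq _ _ _ _ g ig) => -[i j]; rewrite !inE andbT => iT.
    have [k [l [e [Hil Hkj]]]] := (@phi_some _ _ E phi i j (Hinv (Some (i, j)))).
    rewrite gS in e; case: e => ->; rewrite ?inE /=.
    by apply/existsP; exists i; rewrite iT.
  rewrite !cardsX !cardsT !card_ord in H.
  rewrite /a mulrA ler_pdivrMr ?ltr0n // -!natrM ler_nat.
  by rewrite [X in (_ <= X)%N]mulnC.
- have n0 : (0 < n)%N.
    case/card_gt0P: HT => i _; exact: (leq_ltn_trans (leq0n _) (ltn_ord i)).
  have H : (#|setX [set: 'I_m] T| <= #|setX (rows_meeting E T) [set: 'I_n]|)%N.
    apply: (@count_ineq _ _ _ _ g ig) => -[i j]; rewrite !inE /= => jT.
    have [k [l [e [Hil Hkj]]]] := (@phi_some _ _ E phi i j (Hinv (Some (i, j)))).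
    rewrite gS in e; case: e => ->; rewrite ?inE /= andbT.
    by apply/existsP; exists j; rewrite jT.
  rewrite !cardsX !cardsT !card_ord in H.
  rewrite /a invf_div mulrA ler_pdivrMr ?ltr0n // -!natrM ler_nat.
  by rewrite mulnC.
Qed.
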